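(* Let $(E,\mathcal{E},\nu)$ be a $\sigma$-finite measure space, $\phi$ a Young function satisfying the $\Delta_2$-condition, $w$ a weight function, and $\Psi:E\to E$ a non-singular measurable transformation inducing the composition operator $C_\Psi f=f\circ\Psi$ on the Orlicz-Lorentz space $L_{(\phi,w)}$. For $m\ge0$ let $\nu_m=\nu\circ\Psi^{-m}$. Then $\mathcal{A}(C_\Psi)=\infty$ if and only if the measures $\nu_m$ and $\nu_{m+1}$ are not equivalent for any natural number $m$.
   Context: A Young function is a convex $\phi:[0,\infty)\to[0,\infty)$ with $\phi(x)=0\iff x=0$ and $\lim_{x\to\infty}\phi(x)=\infty$; $\Delta_2$-condition: $\phi(2x)\le k\phi(x)$ for some $k>0$ and all $x>0$. A weight function is a non-increasing locally integrable $w:(0,\infty)\to(0,\infty)$ with $\int_0^\infty w=\infty$. For measurable $f$, $\nu_f(s)=\nu\{|f|>s\}$, $f^*(t)=\inf\{s>0:\nu_f(s)\le t\}$; $L_{(\phi,w)}$ is the space of measurable $f:E\to\mathbb{C}$ with $\int_0^\infty\phi(\alpha f^*(t))w(t)\,dt<\infty$ for some $\alpha>0$, with the Luxemburg norm. $\Psi$ non-singular: $\nu(\Psi^{-1}(S))=0$ whenever $\nu(S)=0$; $\nu\circ\Psi^{-m}(S)=\nu(\Psi^{-m}(S))$, $\Psi^0=\mathrm{id}$. Measures $\nu_1,\nu_2$ are equivalent if $\nu_1\ll\nu_2\ll\nu_1$. The ascent $\mathcal{A}(T)$ is the smallest integer $m$ with $\mathcal{N}(T^m)=\mathcal{N}(T^{m+1})$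 ($\mathcal{N}$ = kernel), and $\infty$ if no such $m$ exists. *)

(* Defs.v *)
From HB Require Import structures.
From mathcomp Require Import all_boot all_order all_algebra.
From mathcomp Require Import all_classical all_reals all_analysis.
From mathcomp Require Import complex.
Set Implicit Arguments. Unset Strict Implicit. Unset Printing Implicit Defensive.
Import Order.TTheory GRing.Theory Num.Theory.
Local Open Scope classical_set_scope.
Local Open Scope ring_scope.

Section OrliczLorentz.
Context {d : measure_display} {T : measurableType d} {R : realType}.

Definition measurable_C (f : T -> R[i]) : Prop :=
  measurable_fun setT (fun x => complex.Re (f x)) /\
  measurable_fun setT (fun x => complex.Im (f x)).

Definition distrib (nu : set T -> \bar R) (f : T -> R[i]) (s : R) : \bar R :=
  nu [set x | s < Normc.normc (f x)].

(* decreasing rearrangement f^*(t) = inf {s > 0 : nu_f(s) <= t} (= +oo if empty) *)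
Definition rearr (nu : set T -> \bar R) (f : T -> R[i]) (t : R) : \bar R :=
  ereal_inf ((fun s => s%:E) @` [set s : R | 0 < s /\ (distrib nu f s <= t%:E)%E]).

Definition phibar (phi : R -> R) (x : \bar R) : \bar R :=
  match x with
  | EFin r => (phi r)%:E
  | +oo%E => +oo%E
  | -oo%E => 0%E
  end.

Definition in_OL (nu : set T -> \bar R) (phi w : R -> R) (f : T -> R[i]) : Prop :=
  measurable_C f /\
  exists alpha : R, 0 < alpha /\
    (\int[@lebesgue_measure R]_(t in `]0%R, +oo[%classic)
        (phibar phi (alpha%:E * rearr nu f t) * (w t)%:E) < +oo)%E.

Definition kerC (nu : {measure set T -> \bar R}) (phi w : R -> R)
  (Psi : T -> T) (m : nat) : set (T -> R[i]) :=
  [set f | in_OL nu phi w f /\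
     {ae nu, forall x, iter m (fun g : T -> R[i] => g \o Psi) f x = 0}].

Definition nu_iter (nu : set T -> \bar R) (Psi : T -> T) (m : nat) : set T -> \bar R :=
  fun A => nu ((iter m Psi) @^-1` A).

End OrliczLorentz.

Definition meas_equiv {d : measure_display} {T : measurableType d} {R : realType}
  (m1 m2 : set T -> \bar R) : Prop := m1 `<< m2 /\ m2 `<< m1.

Lemma ex_asbool_nat (P : nat -> Prop) : (exists m, P m) -> exists m, `[< P m >].
Proof. by move=> [m Pm]; exists m; apply/asboolP. Qed.

(* ascent: smallest m with N(T^m) = N(T^(m+1)); None encodes infinity *)
Definition ascent {U : Type} (K : nat -> set U) : option nat :=
  match pselect (exists m, K m = K m.+1) with
  | left h => Some (ex_minn (ex_asbool_nat h))
  | right _ => None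
  end.

(* Main.v *)
Require Import Defs.
From HB Require Import structures.
From mathcomp Require Import all_boot all_order all_algebra.
From mathcomp Require Import all_classical all_reals all_analysis.
From mathcomp Require Import complex.
Import Order.TTheory GRing.Theory Num.Theory.
Local Open Scope classical_set_scope.
Local Open Scope ring_scope.

Lemma iterC (T U : Type) (Psi : T -> T) m (f : T -> U) x :
  iter m (fun g => g \o Psi) f x = f (iter m Psi x).
Proof. by elim: m f x => // m IH f x; rewrite iterS /= IH -iterSr. Qed.

Lemma mpreim_iter (d : measure_display) (T : measurableType d) (Psi : T -> T) m A :
  measurable_fun setT Psi -> measurable A -> measurable (iter m Psi @^-1` A).
Proof.
move=> mPsi; elim: m A => [|m IH] A mA; first exact: mA.
have -> : iter m.+1 Psi @^-1` A = iter m Psi @^-1` (Psi @^-1` A) by [].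
by apply: IH; rewrite -(setTI (Psi @^-1` A)); apply: mPsi.
Qed.

Lemma ae_intro (d : measure_display) (T : measurableType d) (R : realType)
  (nu : {measure set T -> \bar R}) (P : T -> Prop) N :
  measurable N -> nu N = 0%E -> (forall x, ~ P x -> N x) -> {ae nu, forall x, P x}.
Proof. by move=> mN N0 NP; exists N; split. Qed.

Lemma ae_elim (d : measure_display) (T : measurableType d) (R : realType)
  (nu : {measure set T -> \bar R}) (P : T -> Prop) :
  {ae nu, forall x, P x} -> exists N, [/\ measurable N, nu N = 0%E & forall x, ~ P x -> N x].
Proof. by case=> N [mN N0 NP]; exists N; split. Qed.
Lemma indic_in_OL (d : measure_display) (T : measurableType d) (R : realType)
  (nu : {measure set T -> \bar R}) (phi w : R -> R) (B : set T) :
  measurable B -> (nu B < +oo)%E -> phi 0 = 0 -> 0 <= phi 1 ->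
  (forall t, 0 < t -> 0 < w t) ->
  (forall t, 0 < t ->
     (@lebesgue_measure R).-integrable `]0%R, t]%classic (fun x => (w x)%:E)) ->
  in_OL nu phi w (fun x => Complex (\1_B x) 0).
Proof.
move=> mB nuB phi0 phi1 wpos wint.
set f := (fun x => Complex (\1_B x) 0).
have hN x : Normc.normc (f x) = if x \in B then 1 else 0.
  rewrite /Normc.normc /= indicE; case: (x \in B) => /=.
    by rewrite expr0n /= addr0 expr1n; exact: sqrtr1.
  by rewrite expr0n /= addr0; exact: sqrtr0.
split.
  by split; [exact: measurable_realfun.measurable_indic | exact: measurable_cst].
clearbody f.
have hdist s : 0 < s -> distrib nu f s = if s < 1 then nu B else 0%E.
  move=> s0; rewrite /distrib; case: ifPn => s1.
    congr (nu _); apply/seteqP; split => x /=; rewrite hN.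
      by case: ifPn => [/set_mem //|_]; rewrite ltNge (ltW s0).
    by move=> Bx; rewrite mem_set.
  rewrite -(measure0 nu); congr (nu _); apply/seteqP; split => x //=.
  by rewrite hN; case: ifPn => _; [rewrite (negbTE s1)|rewrite ltNge (ltW s0)].
set a := fine (nu B).
have haB : nu B = a%:E by rewrite fineK // ge0_fin_numE // measure_ge0.
have a0 : 0 <= a by rewrite /a fine_ge0 // measure_ge0.
have hre t : 0 < t -> rearr nu f t = if t < a then 1%:E else 0%:E.
  move=> t0; rewrite /rearr; case: ifPn => ta.
    apply/le_anti/andP; split.
      apply: ereal_inf_lbound; exists 1 => //; split => //.
      by rewrite hdist // ltxx lee_fin ltW.
    apply: le_ereal_inf_tmp => _ [s [s0 hs] <-]; rewrite lee_fin; move: hs.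
    rewrite hdist //; case: ifPn => [_|]; last by rewrite -leNgt.
    by rewrite haB lee_fin leNgt ta.
  apply/le_anti/andP; split.
    apply/lee_addgt0Pr => e e0; rewrite add0e; apply: ereal_inf_lbound.
    exists e => //; split => //; rewrite hdist //; case: ifPn => _.
      by rewrite haB lee_fin leNgt.
    by rewrite lee_fin ltW.
  by apply: le_ereal_inf_tmp => _ [s [s0 _] <-]; rewrite lee_fin ltW.
have hmem t : (t \in `]-oo, a[%classic) = (t < a).
  by rewrite mem_setE in_itv.
exists 1; split; first exact: ltr01.
set h := fun t => ((phi 1 * \1_(`]-oo, a[%classic) t) * w t)%:E.
have -> : (\int[@lebesgue_measure R]_(t in `]0%R, +oo[%classic)
   (phibar phi (1%:E * rearr nu f t) * (w t)%:E) =
   \int[@lebesgue_measure R]_(t in `]0%R, +oo[%classic) h t)%E.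
  apply: eq_integral.
  move=> t; rewrite mem_setE in_itv /= andbT => t0.
  rewrite mul1e hre // /h indicE hmem; case: ifPn => ta /=.
    by rewrite mulr1 EFinM.
  by rewrite phi0 mul0e mulr0 mul0r.
have b0 : 0 < a + 1 by apply: (le_lt_trans a0); rewrite ltrDl ltr01.
rewrite integral_mkcond (_ : h \_ _ = h \_ `]0, a+1]%classic); last first.
  apply/funext => t; rewrite /patch !mem_setE !in_itv /= andbT.
  case: (ltrP 0 t) => t0 //=; case: (lerP t (a+1)) => tb //.
  rewrite /h indicE hmem (_ : (t < a) = false) ?mulr0 ?mul0r //.
  apply/negbTE; rewrite -leNgt; apply/ltW/(le_lt_trans _ tb).
  by rewrite lerDl ler01.
rewrite -integral_mkcond; apply: integrable_lty; first exact: measurable_itv.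
have hi : (@lebesgue_measure R).-integrable `]0, a+1]%classic
    (fun x => (phi 1)%:E * (w x)%:E)%E.
  by apply: integrableZl; [exact: measurable_itv | exact: wint].
apply: (le_integrable _ _ _ hi); first exact: measurable_itv.
  rewrite /h; apply/measurable_realfun.measurable_EFinP; apply: measurable_realfun.measurable_funM.
    apply: measurable_realfun.measurable_funM; first exact: measurable_cst.
    exact: measurable_realfun.measurable_indic (measurable_itv _).
  by apply/measurable_realfun.measurable_EFinP; have /integrableP[] := wint _ b0.
move=> t _; rewrite /h -EFinM !abse_EFin lee_fin indicE.
by case: (_ \in _); rewrite ?mulr1 ?mulr0 ?mul0r ?normr0 ?normr_ge0.
Qed.

Lemma mono0 (d : measure_display) (T : measurableType d) (R : realType)
  (nu : {measure set T -> \bar R}) X Y :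
  measurable X -> measurable Y -> X `<=` Y -> nu Y = 0%E -> nu X = 0%E.
Proof.
move=> mX mY XY Y0; apply/eqP; rewrite -measure_le0 -Y0.
by apply: le_measure => //; rewrite inE.
Qed.

Theorem theorem3p5 (d : measure_display) (T : measurableType d) (R : realType)
  (nu : {measure set T -> \bar R}) (phi w : R -> R) (Psi : T -> T) :
  sigma_finite setT nu ->
  (* phi is a Young function *)
  (forall x, 0 <= x -> 0 <= phi x) ->
  (forall x, 0 <= x -> (phi x = 0 <-> x = 0)) ->
  (forall x y l, 0 <= x -> 0 <= y -> 0 <= l <= 1 ->
     phi (l * x + (1 - l) * y) <= l * phi x + (1 - l) * phi y) ->
  (forall M : R, exists N : R, forall x, N <= x -> M <= phi x) ->
  (* Delta_2 condition *)
  (exists k : R, 0 < k /\ forall x, 0 < x -> phi (2 * x) <= k * phi x) ->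
  (* w is a weight function *)
  (forall t, 0 < t -> 0 < w t) ->
  (forall s t, 0 < s -> s <= t -> w t <= w s) ->
  (forall t, 0 < t ->
     (@lebesgue_measure R).-integrable `]0%R, t]%classic (fun x => (w x)%:E)) ->
  (\int[@lebesgue_measure R]_(t in `]0%R, +oo[%classic) (w t)%:E = +oo)%E ->
  (* Psi is a non-singular measurable transformation *)
  measurable_fun setT Psi ->
  (forall S, measurable S -> nu S = 0%E -> nu (Psi @^-1` S) = 0%E) ->
  (* C_Psi maps L_(phi,w) into itself *)
  (forall f, in_OL nu phi w f -> in_OL nu phi w (f \o Psi)) ->
  (ascent (kerC nu phi w Psi) = None <->
   forall m : nat, ~ meas_equiv (nu_iter nu Psi m) (nu_iter nu Psi m.+1)).
Proof.
move=> hsf hpos hphi0 _ _ _ wpos _ wint _ mPsi nons _.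
have phi0 : phi 0 = 0 by apply/(hphi0 0 (lexx _)).
have phi1 : 0 <= phi 1 by apply: hpos; exact: ler01.
have mpre m A : measurable A -> measurable (iter m Psi @^-1` A).
  exact: mpreim_iter.
have dom2 m : null_dominates (nu_iter nu Psi m) (nu_iter nu Psi m.+1).
  move=> N hN A mA AN; rewrite /nu_iter.
  have -> : iter m.+1 Psi @^-1` A = Psi @^-1` (iter m Psi @^-1` A).
    by apply/funext => x; rewrite /preimage /=; rewrite -iterSr.

  by apply: nons; [exact: mpre | exact: hN].
have key m : kerC nu phi w Psi m = kerC nu phi w Psi m.+1 <->
    meas_equiv (nu_iter nu Psi m) (nu_iter nu Psi m.+1).
  split.
    move=> Hk; split; last exact: dom2.
    move=> N hN A mA AN; have hA := hN A mA AN; move: hA; rewrite /nu_iter => hA.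
    have [//|hne] := eqVneq (nu (iter m Psi @^-1` A)) 0%E.
    case: hsf => F FT Fm.
    have [k hk] : exists k, ~ (nu (iter m Psi @^-1` (A `&` F k)) = 0%E).
      apply/existsNP => H0; move/eqP: hne; apply.
      apply/eqP; rewrite eq_le measure_ge0 andbT.
      apply: (le_trans (@measure_sigma_subadditive _ _ _ nu _
        (fun k => iter m Psi @^-1` (A `&` F k)) _ _ _)).
      - by move=> k; apply: mpre; apply: measurableI => //; exact: (Fm k).1.
      - exact: mpre.
      - move=> x Ax; have : (setT : set T) (iter m Psi x) by [].
        by rewrite FT => -[k _ Fk]; exists k.
      by rewrite eseries0.
    set B := A `&` F k.
    have mB : measurable B by apply: measurableI => //; exact: (Fm k).1.
    have nuB : (nu B < +oo)%E.
      apply: (le_lt_trans _ (Fm k).2); apply: le_measure; rewrite ?inE //.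
        exact: (Fm k).1.
      by move=> x [].
    have hf := @indic_in_OL _ _ _ nu phi w B mB nuB phi0 phi1 wpos wint.
    set f := (fun x => Complex (\1_B x) 0) in hf.
    have fK1 : kerC nu phi w Psi m.+1 f.
      split => //; apply: (@ae_intro _ _ _ _ _ (iter m.+1 Psi @^-1` A)) => //.
        exact: mpre.
      move=> x; rewrite iterC => hx; apply: contrapT => nA; apply: hx.
      by rewrite /f indicE memNset // => -[].
    rewrite -Hk in fK1; case: fK1 => _ /ae_elim [N' [mN' N0 hN']].
    exfalso; apply: hk; apply: (@mono0 _ _ _ nu _ N' _ mN' _ N0); first by apply: mpre.
    move=> x Bx; apply: hN'; rewrite iterC /f indicE mem_set // => -[] /eqP.
    by rewrite oner_eq0.
  move=> [Hdom _]; apply/seteqP; split.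
    move=> f [hf /ae_elim [N [mN N0 hN]]]; split => //.
    apply: (@ae_intro _ _ _ _ _ (Psi @^-1` N)).
    - by rewrite -(setTI (Psi @^-1` N)); apply: mPsi.
    - exact: nons.
    move=> x; rewrite iterC iterSr -iterC => /hN.
    by [].
  move=> f [hf /ae_elim [N [mN N0 hN]]]; split => //.
  case: (hf.1) => mRe mIm.
  set S := [set y | f y <> 0].
  have mS : measurable S.
    have -> : S = ~` (((fun y => complex.Re (f y)) @^-1` [set 0]) `&`
                     ((fun y => complex.Im (f y)) @^-1` [set 0])).
      apply/seteqP; split => y /=.
        move=> fy [h1 h2]; apply: fy; move: h1 h2.
        by rewrite /preimage /=; case: (f y) => ? ? /= -> ->.
      by move=> H fy; apply: H; rewrite /preimage /= fy.
    apply: measurableC; apply: measurableI.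
      by rewrite -(setTI (_ @^-1` _)); apply: mRe => //; exact: measurable_set1.
    by rewrite -(setTI (_ @^-1` _)); apply: mIm => //; exact: measurable_set1.
  have S1 : nu (iter m.+1 Psi @^-1` S) = 0%E.
    apply: (@mono0 _ _ _ nu _ N _ mN _ N0); first exact: mpre.
    by move=> x Sx; apply: hN; rewrite iterC.
  have hnull : (nu_iter nu Psi m.+1).-null_set S.
    move=> A mA AS; rewrite /nu_iter.
    by apply: (@mono0 _ _ _ nu _ _ _ (mpre _ _ mS) _ S1); [exact: mpre | move=> x /AS].
  have S0 := Hdom S hnull S mS (@subset_refl _ S).
  apply: (@ae_intro _ _ _ _ _ (iter m Psi @^-1` S)) => //.
    exact: mpre.
  by move=> x; rewrite iterC.
split.
  move=> hA m /key Hk; move: hA; rewrite /ascent.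
  by case: pselect => // -[]; exists m.
move=> H; rewrite /ascent; case: pselect => // -[m Hm]; exfalso; exact: (H m ((key m).1 Hm)).
Qed.
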